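(* Let $\gamma>0$, $\tau\ge 1$, and let $\xi$ be an irrational number with continued fraction expansion $\xi=[a_0;a_1,a_2,\dots]$, convergents $p_k/q_k=[a_0;a_1,\dots,a_k]$ (in lowest terms, $q_k\ge 1$), and complete quotients $a'_k:=[a_k;a_{k+1},a_{k+2},\dots]$. Then $\xi\in D_{\gamma,\tau}$ if and only if $$\frac{q_{k+1}}{q_k^{\tau}}+\frac{1}{a'_{k+2}\,q_k^{\tau-1}}\le\frac1\gamma\qquad\text{for all }k\ge 0.$$
   Context: For $\gamma>0$ and $\tau\ge 1$, the Diophantine set $D_{\gamma,\tau}$ is the set of all real numbers $\xi$ such that $|\xi q-p|\ge \gamma/q^{\tau}$ for all $p\in\mathbb{Z}$ and all $q\in\mathbb{N}=\{1,2,3,\dots\}$. Continued fraction expansions use the standard conventions: $a_0\in\mathbb{Z}$, $a_i\in\mathbb{N}$ for $i\ge1$, $p_{-1}=1$, $q_{-1}=0$, $p_0=a_0$, $q_0=1$, and $p_{k+1}=a_{k+1}p_k+p_{k-1}$, $q_{k+1}=a_{k+1}q_k+q_{k-1}$. *)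

(* Defs.v *)
From Stdlib Require Import Reals ZArith.
Open Scope R_scope.

Definition irrational (xi : R) : Prop :=
  forall (p : Z) (q : nat), (1 <= q)%nat -> xi <> IZR p / INR q.

(* Diophantine set D_{gamma,tau}: |xi q - p| >= gamma / q^tau for all p in Z, q in N = {1,2,...}.
   q^tau with real exponent tau is Rpower (INR q) tau (q >= 1 > 0). *)
Definition Diophantine (gamma tau xi : R) : Prop :=
  forall (p : Z) (q : nat), (1 <= q)%nat ->
    Rabs (xi * INR q - IZR p) >= gamma / Rpower (INR q) tau.

Definition floorR (x : R) : Z := Int_part x.

(* Complete quotients a'_k = [a_k; a_{k+1}, ...] of xi (for irrational xi):
   a'_0 = xi, a'_{k+1} = 1 / (a'_k - floor a'_k). *)
Fixpoint cq (xi : R) (k : nat) : R :=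
  match k with
  | O => xi
  | S k' => / (cq xi k' - IZR (floorR (cq xi k')))
  end.

Definition pq_a (xi : R) (k : nat) : Z := floorR (cq xi k).

(* Convergent numerators/denominators with the standard recurrence:
   p_{-1}=1, q_{-1}=0, p_0=a_0, q_0=1,
   p_{k+1} = a_{k+1} p_k + p_{k-1},  q_{k+1} = a_{k+1} q_k + q_{k-1}.
   conv xi k = ((p_{k-1}, q_{k-1}), (p_k, q_k)). *)
Fixpoint conv (xi : R) (k : nat) : (Z * Z) * (Z * Z) :=
  match k with
  | O => ((1%Z, 0%Z), (pq_a xi 0, 1%Z))
  | S k' =>
      let '((pm, qm), (pn, qn)) := conv xi k' in
      ((pn, qn), (pq_a xi k * pn + pm, pq_a xi k * qn + qm)%Z)
  end.

Definition cf_p (xi : R) (k : nat) : Z := fst (snd (conv xi k)).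
Definition cf_q (xi : R) (k : nat) : Z := snd (snd (conv xi k)).

(* Main.v *)
Require Import Defs.
From Stdlib Require Import Reals ZArith Lra Lia Psatz.
Open Scope R_scope.

Definition Pm xi k := fst (fst (conv xi k)).
Definition Qm xi k := snd (fst (conv xi k)).

Lemma p_S xi k : cf_p xi (S k) = (pq_a xi (S k) * cf_p xi k + Pm xi k)%Z.
Proof. unfold cf_p, Pm; cbn [conv]; destruct (conv xi k) as [[a b][c d]]; reflexivity. Qed.
Lemma q_S xi k : cf_q xi (S k) = (pq_a xi (S k) * cf_q xi k + Qm xi k)%Z.
Proof. unfold cf_q, Qm; cbn [conv]; destruct (conv xi k) as [[a b][c d]]; reflexivity. Qed.
Lemma pm_S xi k : Pm xi (S k) = cf_p xi k.
Proof. unfold cf_p, Pm; cbn [conv]; destruct (conv xi k) as [[a b][c d]]; reflexivity. Qed.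
Lemma qm_S xi k : Qm xi (S k) = cf_q xi k.
Proof. unfold cf_q, Qm; cbn [conv]; destruct (conv xi k) as [[a b][c d]]; reflexivity. Qed.
Lemma p_0 xi : cf_p xi 0 = pq_a xi 0. Proof. reflexivity. Qed.
Lemma q_0 xi : cf_q xi 0 = 1%Z. Proof. reflexivity. Qed.
Lemma pm_0 xi : Pm xi 0 = 1%Z. Proof. reflexivity. Qed.
Lemma qm_0 xi : Qm xi 0 = 0%Z. Proof. reflexivity. Qed.
Lemma cq_S xi k : cq xi (S k) = / (cq xi k - IZR (pq_a xi k)).
Proof. reflexivity. Qed.
Lemma cq_0 xi : cq xi 0 = xi. Proof. reflexivity. Qed.

Lemma frac_bounds x : irrational x -> IZR (floorR x) < x < IZR (floorR x) + 1.
Proof.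
  intros H. destruct (base_Int_part x) as [H1 H2]. unfold floorR. split; [|lra].
  destruct H1 as [H1|H1]; auto. exfalso.
  apply (H (Int_part x) 1%nat (le_n 1)). replace (INR 1) with 1 by reflexivity.
  rewrite H1; field.
Qed.

Lemma cq_irr xi k : irrational xi -> irrational (cq xi k).
Proof.
  intros Hx. induction k; auto. rewrite cq_S. unfold pq_a.
  intros p q Hq Heq. set (x := cq xi k) in *.
  destruct (frac_bounds x IHk) as [B1 B2]. set (n := floorR x) in *.
  set (f := x - IZR n) in *.
  assert (Hf : 0 < f) by (unfold f; lra).
  assert (HqR : 1 <= INR q) by (apply (le_INR 1); auto).
  assert (Hp : IZR p = INR q * / f) by (rewrite Heq; field; lra).
  assert (Hp0 : (0 < p)%Z).
  { apply lt_IZR. rewrite Hp. apply Rmult_lt_0_compat; [lra|]. apply Rinv_0_lt_compat; lra. }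
  assert (Hpf : IZR p * f = INR q) by (rewrite Hp; field; lra).
  apply (IHk (n * p + Z.of_nat q)%Z (Z.to_nat p)); [lia|].
  rewrite INR_IZR_INZ, Z2Nat.id by lia. rewrite plus_IZR, mult_IZR, <- INR_IZR_INZ.
  rewrite <- Hpf. unfold f. field. apply not_0_IZR; lia.
Qed.

Lemma cq_gt1 xi k : irrational xi -> 1 < cq xi (S k).
Proof.
  intros Hx. rewrite cq_S. destruct (frac_bounds _ (cq_irr xi k Hx)) as [B1 B2].
  unfold pq_a. rewrite <- Rinv_1. apply Rinv_lt_contravar; lra.
Qed.

Lemma a_ge1 xi k : irrational xi -> (1 <= pq_a xi (S k))%Z.
Proof.
  intros Hx. assert (H := cq_gt1 xi k Hx). destruct (base_Int_part (cq xi (S k))) as [_ H2].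
  unfold pq_a, floorR. assert (0 < Int_part (cq xi (S k)))%Z; [|lia].
  apply lt_IZR. lra.
Qed.

Lemma rr xi k : irrational xi -> (cq xi k - IZR (pq_a xi k)) * cq xi (S k) = 1.
Proof.
  intros Hx. rewrite cq_S. destruct (frac_bounds _ (cq_irr xi k Hx)) as [B1 B2].
  unfold pq_a. field. lra.
Qed.

Lemma Q_pos xi k : irrational xi -> (1 <= cf_q xi k)%Z /\ (0 <= Qm xi k)%Z.
Proof.
  intros Hx. induction k.
  - rewrite q_0, qm_0; lia.
  - rewrite q_S, qm_S. pose proof (a_ge1 xi k Hx). nia.
Qed.

Lemma Q_grow xi k : irrational xi -> (Z.of_nat (S k) <= cf_q xi (S k))%Z.
Proof.
  intros Hx. induction k.
  - rewrite q_S, q_0, qm_0. pose proof (a_ge1 xi 0 Hx). lia.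
  - rewrite q_S, qm_S. pose proof (a_ge1 xi (S k) Hx). pose proof (Q_pos xi k Hx).
    pose proof (Q_pos xi (S k) Hx). nia.
Qed.

Lemma Q_mono xi k : irrational xi -> (cf_q xi k <= cf_q xi (S k))%Z.
Proof.
  intros Hx. rewrite q_S. pose proof (a_ge1 xi k Hx). pose proof (Q_pos xi k Hx). nia.
Qed.

Definition Dt xi k := (cf_p xi k * Qm xi k - Pm xi k * cf_q xi k)%Z.

Lemma Dt_S xi k : Dt xi (S k) = (- Dt xi k)%Z.
Proof. unfold Dt. rewrite p_S, q_S, pm_S, qm_S. ring. Qed.

Lemma Dt_pm xi k : Dt xi k = 1%Z \/ Dt xi k = (-1)%Z.
Proof.
  induction k.
  - right. unfold Dt. rewrite p_0, q_0, pm_0, qm_0. ring.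
  - rewrite Dt_S. lia.
Qed.

Lemma conv_id xi k : irrational xi ->
  xi * (IZR (cf_q xi k) * cq xi (S k) + IZR (Qm xi k))
  = IZR (cf_p xi k) * cq xi (S k) + IZR (Pm xi k).
Proof.
  intros Hx. induction k.
  - rewrite p_0, q_0, pm_0, qm_0. pose proof (rr xi 0 Hx) as H. rewrite cq_0 in H.
    change (IZR 1) with 1. change (IZR 0) with 0. nra.
  - rewrite p_S, q_S, pm_S, qm_S. rewrite !plus_IZR, !mult_IZR.
    pose proof (rr xi (S k) Hx) as H.
    set (r1 := cq xi (S k)) in *. set (r2 := cq xi (S (S k))) in *.
    set (a := IZR (pq_a xi (S k))) in *.
    set (q := IZR (cf_q xi k)) in *. set (p := IZR (cf_p xi k)) in *.
    set (qm := IZR (Qm xi k)) in *. set (pm := IZR (Pm xi k)) in *.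
    assert (E : xi * ((a * q + qm) * r2 + q) - ((a * p + pm) * r2 + p)
      = r2 * (xi * (q * r1 + qm) - (p * r1 + pm)) + (xi * q - p) * (a * r2 + 1 - r1 * r2)) by ring.
    rewrite IHk in E. assert (a * r2 + 1 - r1 * r2 = 0) by nra.
    rewrite H0 in E. lra.
Qed.

Definition e xi k := IZR (cf_q xi k) * xi - IZR (cf_p xi k).
Definition Den xi k := IZR (cf_q xi k) * cq xi (S k) + IZR (Qm xi k).

Lemma Den_pos xi k : irrational xi -> 0 < Den xi k.
Proof.
  intros Hx. unfold Den. destruct (Q_pos xi k Hx) as [H1 H2].
  apply IZR_le in H1. apply IZR_le in H2. pose proof (cq_gt1 xi k Hx). nra.
Qed.

Lemma e_Den xi k : irrational xi -> e xi k * Den xi k = - IZR (Dt xi k).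
Proof.
  intros Hx. pose proof (conv_id xi k Hx) as H. unfold e, Den, Dt.
  rewrite minus_IZR, !mult_IZR.
  set (r1 := cq xi (S k)) in *.
  set (q := IZR (cf_q xi k)) in *. set (p := IZR (cf_p xi k)) in *.
  set (qm := IZR (Qm xi k)) in *. set (pm := IZR (Pm xi k)) in *.
  assert (E : (q * xi - p) * (q * r1 + qm) = q * (xi * (q * r1 + qm)) - p * (q * r1 + qm)) by ring.
  rewrite E, H. ring.
Qed.

Lemma abs_e xi k : irrational xi -> Rabs (e xi k) = 1 / Den xi k.
Proof.
  intros Hx. pose proof (e_Den xi k Hx). pose proof (Den_pos xi k Hx).
  assert (e xi k = - IZR (Dt xi k) / Den xi k) by (rewrite <- H; field; lra).
  rewrite H1. destruct (Dt_pm xi k) as [D|D]; rewrite D.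
  - change (IZR 1) with 1. rewrite Rabs_left. field; lra.
    unfold Rdiv. assert (0 < / Den xi k) by (apply Rinv_0_lt_compat; lra). nra.
  - change (IZR (-1)) with (-1). rewrite Rabs_right. field; lra.
    unfold Rdiv. assert (0 < / Den xi k) by (apply Rinv_0_lt_compat; lra). nra.
Qed.

Lemma Den_eq xi k : irrational xi ->
  Den xi k = IZR (cf_q xi (S k)) + IZR (cf_q xi k) / cq xi (S (S k)).
Proof.
  intros Hx. unfold Den. rewrite q_S, plus_IZR, mult_IZR.
  pose proof (rr xi (S k) Hx). pose proof (cq_gt1 xi (S k) Hx).
  assert (cq xi (S k) = IZR (pq_a xi (S k)) + 1 / cq xi (S (S k))).
  { apply Rmult_eq_reg_r with (cq xi (S (S k))); [|lra]. field_simplify; lra. }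
  rewrite H1. field. lra.
Qed.

Lemma e_sign xi k : irrational xi -> e xi k * e xi (S k) < 0.
Proof.
  intros Hx. pose proof (e_Den xi k Hx). pose proof (e_Den xi (S k) Hx).
  pose proof (Den_pos xi k Hx). pose proof (Den_pos xi (S k) Hx).
  rewrite Dt_S, opp_IZR in H0.
  assert (Hm : e xi k * e xi (S k) * (Den xi k * Den xi (S k)) = - (IZR (Dt xi k))^2).
  { transitivity ((e xi k * Den xi k) * (e xi (S k) * Den xi (S k))); [ring|].
    rewrite H, H0. ring. }
  assert (0 < (IZR (Dt xi k))^2).
  { destruct (Dt_pm xi k) as [D|D]; rewrite D; simpl; lra. }
  assert (0 < Den xi k * Den xi (S k)) by nra. nra.
Qed.

Lemma abs_sum x y : 0 < x * y -> Rabs x <= Rabs (x + y).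
Proof.
  intros H. destruct (Rcase_abs x), (Rcase_abs y), (Rcase_abs (x + y));
  rewrite ?Rabs_left, ?Rabs_right by lra; nra.
Qed.

Lemma best_approx xi k (q p : Z) : irrational xi -> (1 <= q)%Z -> (q < cf_q xi (S k))%Z ->
  Rabs (e xi k) <= Rabs (IZR q * xi - IZR p).
Proof.
  intros Hx Hq1 Hq2.
  set (d := Dt xi (S k)).
  assert (Hd : d = (cf_p xi (S k) * cf_q xi k - cf_p xi k * cf_q xi (S k))%Z)
    by (unfold d, Dt; rewrite pm_S, qm_S; reflexivity).
  assert (Hdd : (d * d = 1)%Z) by (destruct (Dt_pm xi (S k)) as [D|D]; unfold d; rewrite D; reflexivity).
  set (u := (d * (q * cf_p xi (S k) - p * cf_q xi (S k)))%Z).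
  set (v := (d * (p * cf_q xi k - q * cf_p xi k))%Z).
  assert (Eq : (u * cf_q xi k + v * cf_q xi (S k) = q)%Z).
  { assert (T : (u * cf_q xi k + v * cf_q xi (S k) = d * q * (cf_p xi (S k) * cf_q xi k - cf_p xi k * cf_q xi (S k)))%Z) by (unfold u, v; ring).
    rewrite T, <- Hd. transitivity (q * (d * d))%Z; [ring|]. rewrite Hdd; ring. }
  assert (Ep : (u * cf_p xi k + v * cf_p xi (S k) = p)%Z).
  { assert (T : (u * cf_p xi k + v * cf_p xi (S k) = d * p * (cf_p xi (S k) * cf_q xi k - cf_p xi k * cf_q xi (S k)))%Z) by (unfold u, v; ring).
    rewrite T, <- Hd. transitivity (p * (d * d))%Z; [ring|]. rewrite Hdd; ring. }
  assert (Ex : IZR q * xi - IZR p = IZR u * e xi k + IZR v * e xi (S k)).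
  { rewrite <- Eq, <- Ep. unfold e. rewrite !plus_IZR, !mult_IZR. ring. }
  clearbody u v. rewrite Ex.
  destruct (Q_pos xi k Hx) as [Hqk _].
  assert (Hu : Rabs (e xi k) <= Rabs (IZR u * e xi k) \/ u = 0%Z).
  { destruct (Z.eq_dec u 0) as [->|Hu]; [right; auto|left].
    rewrite Rabs_mult, Rabs_Zabs. assert (1 <= IZR (Z.abs u)) by (apply IZR_le; lia).
    pose proof (Rabs_pos (e xi k)). nra. }
  destruct (Z.eq_dec v 0) as [Hv|Hv].
  - rewrite Hv in Eq |- *. rewrite Rmult_0_l, Rplus_0_r.
    destruct Hu as [Hu|Hu]; auto. rewrite Hu in Eq. lia.
  - destruct (Z.eq_dec u 0) as [Hu0|Hu0].
    + rewrite Hu0 in Eq. nia.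
    + destruct Hu as [Hu|Hu]; [|contradiction].
      eapply Rle_trans; [apply Hu|]. apply abs_sum.
      assert (Huv : (u * v < 0)%Z) by nia.
      apply IZR_lt in Huv. rewrite mult_IZR in Huv. pose proof (e_sign xi k Hx).
      replace (IZR u * e xi k * (IZR v * e xi (S k)))
        with ((IZR u * IZR v) * (e xi k * e xi (S k))) by ring.
      nra.
Qed.

Lemma bracket xi (n : Z) : irrational xi -> (1 <= n)%Z ->
  exists k, (cf_q xi k <= n < cf_q xi (S k))%Z.
Proof.
  intros Hx Hn.
  assert (forall m, (n < cf_q xi m)%Z -> exists k, (cf_q xi k <= n < cf_q xi (S k))%Z).
  { induction m; intros Hm.
    - rewrite q_0 in Hm. lia.
    - destruct (Z_lt_le_dec n (cf_q xi m)); auto. exists m; lia. }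
  apply (H (S (Z.to_nat n))). pose proof (Q_grow xi (Z.to_nat n) Hx). lia.
Qed.

Lemma Rpower_gt0 x y : 0 < Rpower x y.
Proof. unfold Rpower. apply exp_pos. Qed.

Theorem mainTheorem2 (gamma tau xi : R) :
  0 < gamma -> 1 <= tau -> irrational xi ->
  (Diophantine gamma tau xi <->
   forall k : nat,
     IZR (cf_q xi (S k)) / Rpower (IZR (cf_q xi k)) tau
     + 1 / (cq xi (S (S k)) * Rpower (IZR (cf_q xi k)) (tau - 1))
     <= 1 / gamma).
Proof.
  intros Hg Ht Hx.
  assert (Key : forall k, 
    IZR (cf_q xi (S k)) / Rpower (IZR (cf_q xi k)) tau
     + 1 / (cq xi (S (S k)) * Rpower (IZR (cf_q xi k)) (tau - 1))
    = Den xi k / Rpower (IZR (cf_q xi k)) tau).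
  { intros k. rewrite (Den_eq xi k Hx).
    destruct (Q_pos xi k Hx) as [H1 _]. apply IZR_le in H1.
    pose proof (cq_gt1 xi (S k) Hx).
    assert (Hs : Rpower (IZR (cf_q xi k)) tau = Rpower (IZR (cf_q xi k)) (tau - 1) * IZR (cf_q xi k)).
    { rewrite <- (Rpower_1 (IZR (cf_q xi k))) at 3 by lra. rewrite <- Rpower_plus. f_equal; ring. }
    rewrite Hs. pose proof (Rpower_gt0 (IZR (cf_q xi k)) (tau - 1)). field. repeat split; lra. }
  split.
  - intros HD k. rewrite Key.
    destruct (Q_pos xi k Hx) as [H1 _].
    specialize (HD (cf_p xi k) (Z.to_nat (cf_q xi k))).
    rewrite INR_IZR_INZ, Z2Nat.id in HD by lia.
    assert (HD' := HD ltac:(lia)). fold (e xi k) in HD'.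
    replace (IZR (cf_q xi k) * xi) with (xi * IZR (cf_q xi k)) in HD' by ring.
    unfold e in HD'. rewrite Rmult_comm in HD'.
    change (IZR (cf_q xi k) * xi - IZR (cf_p xi k)) with (e xi k) in HD'.
    rewrite abs_e in HD' by auto.
    pose proof (Den_pos xi k Hx). set (Q := Rpower (IZR (cf_q xi k)) tau) in *.
    assert (0 < Q) by apply Rpower_gt0. set (D := Den xi k) in *.
    apply Rge_le in HD'.
    unfold Rdiv in *. rewrite Rmult_1_l in *.
    apply (Rmult_le_compat_r (D * / gamma)) in HD'.
    2: { apply Rmult_le_pos; [lra|]. left; apply Rinv_0_lt_compat; lra. }
    replace (/ D * (D * / gamma)) with (/ gamma) in HD' by (field; lra).
    replace (gamma * / Q * (D * / gamma)) with (D * / Q) in HD' by (field; lra).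
    exact HD'.
  - intros HC p q Hq.
    destruct (bracket xi (Z.of_nat q) Hx) as [k [Hk1 Hk2]]; [lia|].
    pose proof (best_approx xi k (Z.of_nat q) p Hx ltac:(lia) Hk2) as BA.
    rewrite <- INR_IZR_INZ in BA. rewrite Rmult_comm in BA.
    apply Rle_ge. eapply Rle_trans; [|apply BA]. rewrite abs_e by auto.
    specialize (HC k). rewrite Key in HC.
    destruct (Q_pos xi k Hx) as [H1 _]. apply IZR_le in H1. apply IZR_le in Hk1.
    rewrite <- INR_IZR_INZ in Hk1.
    pose proof (Den_pos xi k Hx). set (Q := Rpower (IZR (cf_q xi k)) tau) in *.
    assert (0 < Q) by apply Rpower_gt0. set (D := Den xi k) in *.
    assert (HQ : Q <= Rpower (INR q) tau) by (apply Rle_Rpower_l; lra).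
    apply Rle_trans with (gamma / Q).
    + unfold Rdiv. apply Rmult_le_compat_l; [lra|]. apply Rinv_le_contravar; lra.
    + unfold Rdiv in *. rewrite Rmult_1_l in *.
      apply (Rmult_le_compat_r (gamma * / D)) in HC.
      2: { apply Rmult_le_pos; [lra|]. left; apply Rinv_0_lt_compat; lra. }
      replace (D * / Q * (gamma * / D)) with (gamma * / Q) in HC by (field; lra).
      replace (/ gamma * (gamma * / D)) with (/ D) in HC by (field; lra).
      exact HC.
Qed.
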